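(* Let $N\ge2$, $d\in\mathbb{N}^*$, $\alpha>0$, $A\in\mathbb{R}_+^{N\times N}$, and let $\psi:\mathbb{R}_+\to\mathbb{R}_+$ satisfy $(r_1-r_2)(\psi(r_1)-\psi(r_2))\le0$ for all $r_1,r_2\ge0$ and $0<\psi(r)\le\psi(0)\le1$. Assume the hierarchical leadership condition: $A_{ij}>0$ only if $j<i$, and for all $i>1$ there exists $j<i$ with $A_{ij}>0$. Consider solutions on $\mathbb{R}_+$ of $$\frac{dx_i}{dt}=v_i,\qquad\frac{dv_i}{dt}=\alpha\sum_{j\ne i}Q_t(i,j)(v_j-v_i)$$ with either (CS) $Q_t(i,j)=A_{ij}\psi(\|x_j(t)-x_i(t)\|_2)$, or (MT) $Q_t(i,j)=\dfrac{A_{ij}\psi(\|x_i(t)-x_j(t)\|_2)}{a_i+\sum_{k\ne i}A_{ik}\psi(\|x_i(t)-x_k(t)\|_2)}$, where $a\in\mathbb{R}_+^N$ satisfies $a_i>0$ whenever $A_{ij}=0$ for all $j\ne i$. Then the solution flocks provided $$V(0)<C_{HL}\sup_{r\ge X(0)}(r-X(0))\psi(r)\quad\text{for (CS)},$$ $$V(0)<M_{HL}\sup_{r\ge X(0)}(r-X(0))\frac{(\bar a+A_* )\psi(r)}{\bar a+A_*\psi(r)}\quad\text{for (MT)},$$ where $A_*=\inf_{i>1}\sum_{j\ne i}A_{ij}$, $B_*=\inf_{i>1}\sum_{j\ne i}B_{ij}$ with $B_{ij}=\dfrac{A_{ij}}{a_i+\sum_{k\ne i}A_{ik}}$, $C_{HL}=\alpha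 A_*/H$, $M_{HL}=\alpha B_*/H$, and $\bar a=\sup_{i>1}a_i$. In particular, for (MT), if $\bar a=0$ the flocking is unconditional (occurs for every initial condition).
   Context: The interaction graph has vertices $\{1,\dots,N\}$ and an edge $i\to j$ iff $i\ne j$ and $A_{ij}>0$; the length of a path is its number of edges. For $i>1$, $h_i$ is the maximal length of a path from $i$ to $1$, and $H=\sup_{i>1}h_i$. $X(t)=\sup_{i,j}\|x_i(t)-x_j(t)\|_2$, $V(t)=\sup_{i,j}\|v_i(t)-v_j(t)\|_2$; flocking means $\sup_{t\ge0}X(t)<+\infty$ and $V(t)\to0$ as $t\to+\infty$. *)

(* Defs.v *)
(* Stdlib reals + Coquelicot. Vertices are the naturals 1..N (vertex 1 is the leader);
   spatial components are indexed 0..d-1. *)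
From Stdlib Require Export Reals List Lia Lra.
From Coquelicot Require Export Coquelicot.
Import ListNotations.
Open Scope R_scope.

Definition Rsum (l : list nat) (f : nat -> R) : R :=
  fold_right (fun j acc => f j + acc) 0 l.

Definition sum_ne (N i : nat) (f : nat -> R) : R :=
  Rsum (filter (fun j => negb (Nat.eqb j i)) (seq 1 N)) f.

Definition norm2 (d : nat) (u : nat -> R) : R :=
  sqrt (Rsum (seq 0 d) (fun k => (u k) ^ 2)).

(* y i k t : k-th component of the position (or velocity) of agent i at time t *)
Definition state := nat -> nat -> R -> R.

Definition dist (d : nat) (y : state) (i j : nat) (t : R) : R :=
  norm2 d (fun k => y i k t - y j k t).

(* sup_{i,j in 1..N} || y_i(t) - y_j(t) ||_2  (all terms are >= 0, so starting the
   max-fold at 0 gives exactly the maximum) *)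
Definition diam (N d : nat) (y : state) (t : R) : R :=
  fold_right Rmax 0
    (flat_map (fun i => map (fun j => dist d y i j t) (seq 1 N)) (seq 1 N)).

(* min / max of f over i in 2..N (requires N >= 2 to be meaningful) *)
Definition min_gt1 (N : nat) (f : nat -> R) : R :=
  fold_right Rmin (f 2%nat) (map f (seq 2 (N - 1))).
Definition max_gt1 (N : nat) (f : nat -> R) : R :=
  fold_right Rmax (f 2%nat) (map f (seq 2 (N - 1))).

Definition rowsum (N : nat) (A : nat -> nat -> R) (i : nat) : R := sum_ne N i (A i).

Definition Astar (N : nat) (A : nat -> nat -> R) : R := min_gt1 N (rowsum N A).

Definition Bmat (N : nat) (A : nat -> nat -> R) (a : nat -> R) (i j : nat) : R :=
  A i j / (a i + rowsum N A i).

Definition Bstar (N : nat) (A : nat -> nat -> R) (a : nat -> R) : R :=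
  min_gt1 N (fun i => sum_ne N i (Bmat N A a i)).

Definition abar (N : nat) (a : nat -> R) : R := max_gt1 N a.

Fixpoint edges_ok (A : nat -> nat -> R) (p : list nat) : Prop :=
  match p with
  | u :: ((w :: _) as q) => (u <> w /\ 0 < A u w) /\ edges_ok A q
  | _ => True
  end.

Definition has_path (N : nat) (A : nat -> nat -> R) (i k : nat) : Prop :=
  exists p : list nat,
    List.length p = S k /\ List.hd 0%nat p = i /\ List.last p 0%nat = 1%nat /\
    List.Forall (fun u => (1 <= u <= N)%nat) p /\ edges_ok A p.

Definition is_height (N : nat) (A : nat -> nat -> R) (H : nat) : Prop :=
  (exists i, (1 < i <= N)%nat /\ has_path N A i H) /\
  (forall i k, (1 < i <= N)%nat -> has_path N A i k -> (k <= H)%nat).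

Definition hier_leader (N : nat) (A : nat -> nat -> R) : Prop :=
  (forall i j, (1 <= i <= N)%nat -> (1 <= j <= N)%nat -> 0 < A i j -> (j < i)%nat) /\
  (forall i, (1 < i <= N)%nat -> exists j, (1 <= j < i)%nat /\ 0 < A i j).

Definition Q_CS (d : nat) (A : nat -> nat -> R) (psi : R -> R) (x : state)
  (t : R) (i j : nat) : R :=
  A i j * psi (dist d x j i t).

Definition Q_MT (N d : nat) (A : nat -> nat -> R) (a : nat -> R) (psi : R -> R)
  (x : state) (t : R) (i j : nat) : R :=
  A i j * psi (dist d x i j t) /
  (a i + sum_ne N i (fun k => A i k * psi (dist d x i k t))).

(* (x, v) solves dx_i/dt = v_i, dv_i/dt = alpha sum_{j<>i} Q_t(i,j)(v_j - v_i) on R_+: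
   continuous on [0, +oo) (right-continuous at 0) and differentiable on (0, +oo). *)
Definition is_solution (N d : nat) (alpha : R) (Q : R -> nat -> nat -> R)
  (x v : state) : Prop :=
  forall i k, (1 <= i <= N)%nat -> (k < d)%nat ->
    filterlim (x i k) (at_right 0) (locally (x i k 0)) /\
    filterlim (v i k) (at_right 0) (locally (v i k 0)) /\
    (forall t, 0 < t ->
       is_derive (x i k) t (v i k t) /\
       is_derive (v i k) t
         (alpha * sum_ne N i (fun j => Q t i j * (v j k t - v i k t)))).

Definition flocks (N d : nat) (x v : state) : Prop :=
  (exists M, forall t, 0 <= t -> diam N d x t <= M) /\
  is_lim (fun t => diam N d v t) p_infty 0.

(* Main.v *)
Require Import Defs.
From Stdlib Require Import Reals.
From Coquelicot Require Import Coquelicot.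
Open Scope R_scope.
From Stdlib Require Import Lra Lia List Factorial Arith Wf_nat Classical.
Require Import Defs.
Import ListNotations.
Open Scope R_scope.


Lemma Rsum_nil f : Rsum [] f = 0. Proof. reflexivity. Qed.
Lemma Rsum_cons a l f : Rsum (a :: l) f = f a + Rsum l f. Proof. reflexivity. Qed.

Lemma Rsum_ext_in l f g : (forall x, In x l -> f x = g x) -> Rsum l f = Rsum l g.
Proof. induction l; intros H; simpl; auto. rewrite H, IHl; auto. intros; apply H; simpl; auto. simpl; auto. Qed.

Lemma Rsum_le_in l f g : (forall x, In x l -> f x <= g x) -> Rsum l f <= Rsum l g.
Proof. induction l; intros H; simpl. lra. apply Rplus_le_compat. apply H; simpl; auto. apply IHl; intros; apply H; simpl; auto. Qed.

Lemma Rsum_zero l f : (forall x, In x l -> f x = 0) -> Rsum l f = 0.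
Proof. intros H; rewrite (Rsum_ext_in l f (fun _ => 0)) by auto. clear H. induction l; simpl; auto; rewrite IHl; lra. Qed.

Lemma Rsum_nonneg l f : (forall x, In x l -> 0 <= f x) -> 0 <= Rsum l f.
Proof. intros H. replace 0 with (Rsum l (fun _ => 0)). apply Rsum_le_in; auto.
 apply Rsum_zero; auto. Qed.

Lemma Rsum_plus l f g : Rsum l (fun x => f x + g x) = Rsum l f + Rsum l g.
Proof. induction l; simpl; [lra| rewrite IHl; lra]. Qed.
Lemma Rsum_minus l f g : Rsum l (fun x => f x - g x) = Rsum l f - Rsum l g.
Proof. induction l; simpl; [lra| rewrite IHl; lra]. Qed.
Lemma Rsum_scal l c f : Rsum l (fun x => c * f x) = c * Rsum l f.
Proof. induction l; simpl; [lra| rewrite IHl; lra]. Qed.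
Lemma Rsum_scal_r l c f : Rsum l (fun x => f x * c) = Rsum l f * c.
Proof. induction l; simpl; [lra| rewrite IHl; lra]. Qed.
Lemma Rsum_swap (l1 l2 : list nat) (F : nat -> nat -> R) :
  Rsum l1 (fun k => Rsum l2 (fun j => F k j)) = Rsum l2 (fun j => Rsum l1 (fun k => F k j)).
Proof. induction l1. simpl. symmetry; apply Rsum_zero; auto.
 simpl. rewrite IHl1, <- Rsum_plus. reflexivity. Qed.

Lemma Rsum_pos_in l f x : (forall y, In y l -> 0 <= f y) -> In x l -> 0 < f x -> 0 < Rsum l f.
Proof. induction l; simpl; intros H Hx Hf. contradiction.
 destruct Hx as [->|Hx]. assert (0 <= Rsum l f) by (apply Rsum_nonneg; auto). lra.
 assert (0 <= f a) by auto. assert (0 < Rsum l f) by (apply IHl; auto). lra. Qed.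

Lemma Rsum_sq_zero l f : Rsum l (fun k => f k ^ 2) = 0 -> forall k, In k l -> f k = 0.
Proof. induction l; intros H k Hk. contradiction. rewrite Rsum_cons in H.
 assert (0 <= Rsum l (fun k => f k ^ 2)) by (apply Rsum_nonneg; intros; apply pow2_ge_0).
 assert (0 <= f a ^ 2) by apply pow2_ge_0.
 destruct Hk as [<-|Hk]. assert (f a ^ 2 = 0) by lra. simpl in *; nra. apply IHl; auto; lra. Qed.

Lemma fold_max_ge x0 l z : In z l -> z <= fold_right Rmax x0 l.
Proof. induction l; simpl; intros H. contradiction. destruct H as [->|H].
 apply Rmax_l. eapply Rle_trans; [apply IHl; auto| apply Rmax_r]. Qed.
Lemma fold_max_ge0 x0 l : x0 <= fold_right Rmax x0 l.
Proof. induction l; simpl. lra. eapply Rle_trans; [apply IHl| apply Rmax_r]. Qed.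
Lemma fold_max_le x0 l b : x0 <= b -> (forall z, In z l -> z <= b) -> fold_right Rmax x0 l <= b.
Proof. induction l; simpl; intros H1 H2. auto. apply Rmax_lub. apply H2; auto. apply IHl; auto. Qed.
Lemma fold_max_in x0 l : fold_right Rmax x0 l = x0 \/ In (fold_right Rmax x0 l) l.
Proof. induction l; simpl. auto. set (m := fold_right Rmax x0 l) in *. destruct (Rle_dec a m) as [h|h]; [rewrite Rmax_right by lra | rewrite Rmax_left by lra].
 destruct IHl as [H|H]; [left|right; right]; auto. right; left; auto. Qed.
Lemma fold_min_le x0 l z : In z l -> fold_right Rmin x0 l <= z.
Proof. induction l; simpl; intros H. contradiction. destruct H as [->|H].
 apply Rmin_l. eapply Rle_trans; [apply Rmin_r| apply IHl; auto]. Qed.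
Lemma fold_min_le0 x0 l : fold_right Rmin x0 l <= x0.
Proof. induction l; simpl. lra. eapply Rle_trans; [apply Rmin_r|apply IHl]. Qed.
Lemma fold_min_ge x0 l b : b < x0 -> (forall z, In z l -> b < z) -> b < fold_right Rmin x0 l.
Proof. induction l; simpl; intros H1 H2. auto. apply Rmin_glb_lt. apply H2; auto. apply IHl; auto. Qed.

Lemma min_gt1_le N f i : (2 <= i <= N)%nat -> min_gt1 N f <= f i.
Proof. intros Hi. unfold min_gt1. destruct (Nat.eq_dec i 2) as [->|Hne]. apply fold_min_le0.
 apply fold_min_le. apply in_map. apply in_seq. lia. Qed.
Lemma min_gt1_pos N f : (forall i, (2 <= i <= N)%nat -> 0 < f i) -> (2 <= N)%nat -> 0 < min_gt1 N f.
Proof. intros H HN. unfold min_gt1. apply fold_min_ge. apply H; lia.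
 intros z Hz. apply in_map_iff in Hz. destruct Hz as [i [<- Hi]]. apply in_seq in Hi. apply H; lia. Qed.
Lemma max_gt1_ge N f i : (2 <= i <= N)%nat -> f i <= max_gt1 N f.
Proof. intros Hi. unfold max_gt1. destruct (Nat.eq_dec i 2) as [->|Hne]. apply fold_max_ge0.
 apply fold_max_ge. apply in_map. apply in_seq. lia. Qed.

Section Lim.
Context {F : (R -> Prop) -> Prop} {FF : Filter F}.
Lemma lim_plus (f g : R -> R) (a b : R) : filterlim f F (locally a) -> filterlim g F (locally b) ->
  filterlim (fun t => f t + g t) F (locally (a + b)).
Proof. intros Hf Hg. apply (filterlim_comp_2 f g Rplus Hf Hg).
 exact (@filterlim_plus R_AbsRing R_NormedModule a b). Qed.
Lemma lim_mult (f g : R -> R) (a b : R) : filterlim f F (locally a) -> filterlim g F (locally b) ->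
  filterlim (fun t => f t * g t) F (locally (a * b)).
Proof. intros Hf Hg. apply (filterlim_comp_2 f g Rmult Hf Hg).
 exact (@filterlim_mult R_AbsRing a b). Qed.
Lemma lim_const (a : R) : filterlim (fun _ => a) F (locally a).
Proof. apply filterlim_const. Qed.
Lemma lim_opp (f : R -> R) (a : R) : filterlim f F (locally a) -> filterlim (fun t => - f t) F (locally (- a)).
Proof. intros Hf. eapply filterlim_comp. apply Hf. exact (@filterlim_opp R_AbsRing R_NormedModule a). Qed.
Lemma lim_minus (f g : R -> R) (a b : R) : filterlim f F (locally a) -> filterlim g F (locally b) ->
  filterlim (fun t => f t - g t) F (locally (a - b)).
Proof. intros. apply lim_plus; auto. apply lim_opp; auto. Qed.
Lemma lim_cont (f h : R -> R) (a : R) : filterlim f F (locally a) -> continuous h a -> filterlim (fun t => h (f t)) F (locally (h a)).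
Proof. intros. eapply filterlim_comp; eauto. Qed.
Lemma lim_Rsum (l : list nat) (G : nat -> R -> R) (b : nat -> R) :
  (forall k, In k l -> filterlim (G k) F (locally (b k))) ->
  filterlim (fun t => Rsum l (fun k => G k t)) F (locally (Rsum l b)).
Proof. induction l; simpl; intros H. apply lim_const. apply lim_plus; auto. Qed.
Lemma Rmax_abs a b : Rmax a b = (a + b + Rabs (a - b)) / 2.
Proof. unfold Rmax; destruct Rle_dec; [rewrite Rabs_left1|rewrite Rabs_right]; lra. Qed.
Lemma lim_max (f g : R -> R) (a b : R) : filterlim f F (locally a) -> filterlim g F (locally b) ->
  filterlim (fun t => Rmax (f t) (g t)) F (locally (Rmax a b)).
Proof. intros. rewrite Rmax_abs. eapply filterlim_ext. intros t; symmetry; apply Rmax_abs.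
 apply lim_mult. apply lim_plus. apply lim_plus; auto. apply lim_cont. apply lim_minus; auto.
 apply continuous_Rabs. apply lim_const. Qed.
Lemma lim_fold_max {A : Type} (l : list A) (G : A -> R -> R) (b : A -> R) x0 :
  (forall k, In k l -> filterlim (G k) F (locally (b k))) ->
  filterlim (fun t => fold_right Rmax x0 (map (fun k => G k t) l)) F (locally (fold_right Rmax x0 (map b l))).
Proof. induction l; simpl; intros H. apply lim_const. apply lim_max; auto. Qed.
End Lim.


Lemma d_val (f : R -> R) (x a b : R) : is_derive f x a -> a = b -> is_derive f x b.
Proof. intros H ->; auto. Qed.
Lemma d_plus (f g : R -> R) x a b : is_derive f x a -> is_derive g x b -> is_derive (fun t => f t + g t) x (a + b).
Proof. intros; apply (is_derive_plus f g x a b); auto. Qed.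
Lemma d_minus (f g : R -> R) x a b : is_derive f x a -> is_derive g x b -> is_derive (fun t => f t - g t) x (a - b).
Proof. intros; apply (is_derive_minus f g x a b); auto. Qed.
Lemma d_mult (f g : R -> R) x a b : is_derive f x a -> is_derive g x b -> is_derive (fun t => f t * g t) x (a * g x + f x * b).
Proof. intros; apply (is_derive_mult f g x a b); auto. intros; apply Rmult_comm. Qed.
Lemma d_const (c : R) x : is_derive (fun _ => c) x 0.
Proof. apply (is_derive_const c x). Qed.
Lemma d_id x : is_derive (fun t : R => t) x 1.
Proof. apply (is_derive_id x). Qed.
Lemma d_comp (f g : R -> R) x a b : is_derive f (g x) a -> is_derive g x b -> is_derive (fun t => f (g t)) x (b * a).
Proof. intros; apply (is_derive_comp f g x a b); auto. Qed.
Lemma d_Rsum (l : list nat) (G : nat -> R -> R) (dG : nat -> R) x :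
  (forall k, In k l -> is_derive (G k) x (dG k)) ->
  is_derive (fun t => Rsum l (fun k => G k t)) x (Rsum l dG).
Proof. induction l; intros H. simpl. apply d_const. simpl. apply d_plus. apply H; simpl; auto.
 apply IHl; intros; apply H; simpl; auto. Qed.

Lemma cont_eps (f : R -> R) x : filterlim f (locally x) (locally (f x)) ->
  forall eps, 0 < eps -> exists delta, 0 < delta /\ forall y, Rabs (y - x) < delta -> Rabs (f y - f x) < eps.
Proof. intros H eps Heps. destruct (proj1 (filterlim_locally f (f x)) H (mkposreal eps Heps)) as [d Hd].
 exists d; split. apply cond_pos. intros y Hy. apply (Hd y Hy). Qed.
Lemma rcont_eps (f : R -> R) : filterlim f (at_right 0) (locally (f 0)) ->
  forall eps, 0 < eps -> exists delta, 0 < delta /\ forall y, 0 < y < delta -> Rabs (f y - f 0) < eps.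
Proof. intros H eps Heps. destruct (proj1 (filterlim_locally f (f 0)) H (mkposreal eps Heps)) as [d Hd].
 exists d; split. apply cond_pos. intros y Hy. apply (Hd y). change (Rabs (y - 0) < d). rewrite Rminus_0_r, Rabs_right; lra. lra. Qed.
Lemma derive_cont (f : R -> R) x df : is_derive f x df -> filterlim f (locally x) (locally (f x)).
Proof. intros H. apply (ex_derive_continuous f x). exists df; auto. Qed.

Lemma cont_rcont (f : R -> R) : filterlim f (locally 0) (locally (f 0)) -> filterlim f (at_right 0) (locally (f 0)).
Proof. intros H. apply (filterlim_filter_le_1 (F := locally 0)). intros P HP. apply filter_imp with (2 := HP). auto. auto. Qed.

Lemma rcont_at (f df : R -> R) t0 :
  filterlim f (at_right 0) (locally (f 0)) -> (forall t, 0 < t -> is_derive f t (df t)) -> 0 <= t0 ->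
  forall eps, 0 < eps -> exists delta, 0 < delta /\ forall y, t0 < y < t0 + delta -> Rabs (f y - f t0) < eps.
Proof. intros Hr Hd Ht0 eps Heps. destruct (Req_dec t0 0) as [->|Hne].
 destruct (rcont_eps f Hr eps Heps) as [d [Hd1 Hd2]]. exists d; split; auto. intros y Hy; apply Hd2; lra.
 destruct (cont_eps f t0 (derive_cont f t0 (df t0) (Hd t0 ltac:(lra))) eps Heps) as [d [Hd1 Hd2]].
 exists d; split; auto. intros y Hy; apply Hd2. rewrite Rabs_right; lra. Qed.

Lemma comparison (f df : R -> R) (T : R) :
  filterlim f (at_right 0) (locally (f 0)) ->
  (forall t, 0 < t -> is_derive f t (df t)) ->
  f 0 <= 0 ->
  (forall t, 0 < t <= T -> 0 < f t -> df t <= 0) ->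
  forall t, 0 <= t <= T -> f t <= 0.
Proof.
 intros Hr Hd H0 Hdf t1 [Ht1a Ht1b]. destruct (Rle_dec (f t1) 0) as [|Hn]; auto. exfalso.
 apply Rnot_le_lt in Hn.
 assert (Ht1 : 0 < t1). { destruct (Req_dec t1 0) as [->|]; lra. }
 set (E := fun s => 0 <= s <= t1 /\ f s <= 0).
 destruct (completeness E) as [t0 [Hub Hlub]].
 { exists t1. intros s [Hs _]. lra. } { exists 0. split; lra. }
 assert (Ht0a : 0 <= t0). { apply Hub. split; lra. }
 assert (Ht0b : t0 <= t1). { apply Hlub. intros s [Hs _]; lra. }
 assert (C1 : forall s, t0 < s <= t1 -> 0 < f s).
 { intros s Hs. destruct (Rle_dec (f s) 0) as [h|h]. assert (s <= t0) by (apply Hub; split; lra). lra. lra. }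
 assert (C2 : forall s, t0 < s < t1 -> f t1 <= f s).
 { intros s Hs. destruct (MVT_gen f s t1 df) as [xi [Hxi Heq]].
   - rewrite Rmin_left, Rmax_right by lra. intros y Hy. apply Hd. lra.
   - rewrite Rmin_left, Rmax_right by lra. intros y Hy. apply continuity_pt_filterlim.
     apply (derive_cont f y (df y)). apply Hd; lra.
   - rewrite Rmin_left, Rmax_right in Hxi by lra.
     assert (df xi <= 0). { apply Hdf. lra. apply C1. lra. }
     nra. }
 assert (C3 : f t1 <= f t0).
 { destruct (Req_dec t0 t1) as [->|Hne]. lra.
   destruct (Rle_dec (f t1) (f t0)) as [|h]; auto. apply Rnot_le_lt in h. exfalso.
   destruct (rcont_at f df t0 Hr Hd Ht0a (f t1 - f t0) ltac:(lra)) as [d [Hd1 Hd2]].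
   set (s := t0 + Rmin d (t1 - t0) / 2).
   assert (Hs1 : t0 < s < t1). { unfold s. assert (0 < Rmin d (t1 - t0)) by (apply Rmin_glb_lt; lra).
     assert (Rmin d (t1 - t0) <= t1 - t0) by apply Rmin_r. lra. }
   assert (Hs2 : s < t0 + d). { unfold s. assert (Rmin d (t1 - t0) <= d) by apply Rmin_l. 
     assert (0 < Rmin d (t1 - t0)) by (apply Rmin_glb_lt; lra). lra. }
   specialize (Hd2 s ltac:(lra)). specialize (C2 s Hs1). apply Rabs_lt_between in Hd2. lra. }
 destruct (Req_dec t0 0) as [Hz|Hnz]. rewrite Hz in C3; lra.
 destruct (cont_eps f t0 (derive_cont f t0 (df t0) (Hd t0 ltac:(lra))) (f t0) ltac:(lra)) as [d [Hd1 Hd2]].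
 assert (t0 <= t0 - d / 2). { apply Hlub. intros s [Hs1 Hs2]. destruct (Rle_dec s (t0 - d/2)) as [|h]; auto.
   exfalso. assert (s <= t0) by (apply Hub; split; auto). specialize (Hd2 s). 
   assert (Rabs (s - t0) < d) by (rewrite Rabs_left1; lra). specialize (Hd2 H1). apply Rabs_lt_between in Hd2. lra. }
 lra.
Qed.

Lemma comparison_mono (f df : R -> R) (T : R) :
  filterlim f (at_right 0) (locally (f 0)) ->
  (forall t, 0 < t -> is_derive f t (df t)) ->
  (forall t, 0 < t <= T -> df t <= 0) ->
  forall t, 0 <= t <= T -> f t <= f 0.
Proof. intros Hr Hd Hdf t Ht.
 assert (H := comparison (fun s => f s - f 0) df T). simpl in H.
 assert (f t - f 0 <= 0); [|lra]. apply H; auto.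
 - replace (f 0 - f 0) with (f 0 - f 0) by lra. apply lim_minus; auto. apply lim_const.
 - intros s Hs. apply (d_val _ _ (df s - 0)). apply d_minus; auto. apply d_const. lra.
 - lra.
Qed.


Definition dot (d : nat) (a b : nat -> R) : R := Rsum (seq 0 d) (fun k => a k * b k).

Lemma sq_expand l (a b : nat -> R) p q :
  Rsum l (fun k => (p * a k - q * b k) ^ 2) =
  p ^ 2 * Rsum l (fun k => a k ^ 2) - 2 * p * q * Rsum l (fun k => a k * b k) + q ^ 2 * Rsum l (fun k => b k ^ 2).
Proof. induction l. simpl; ring. rewrite !Rsum_cons, IHl. ring. Qed.

Lemma CS_list l (a b : nat -> R) :
  Rsum l (fun k => a k * b k) <= sqrt (Rsum l (fun k => a k ^ 2)) * sqrt (Rsum l (fun k => b k ^ 2)).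
Proof.
 set (A := Rsum l (fun k => a k ^ 2)). set (B := Rsum l (fun k => b k ^ 2)). set (S := Rsum l (fun k => a k * b k)).
 assert (HA : 0 <= A) by (apply Rsum_nonneg; intros; apply pow2_ge_0).
 assert (HB : 0 <= B) by (apply Rsum_nonneg; intros; apply pow2_ge_0).
 assert (sA2 : sqrt A * sqrt A = A) by (apply sqrt_sqrt; auto).
 assert (sB2 : sqrt B * sqrt B = B) by (apply sqrt_sqrt; auto).
 assert (hA := sqrt_pos A). assert (hB := sqrt_pos B).
 assert (H := sq_expand l a b (sqrt B) (sqrt A)). fold A B S in H.
 assert (H0 : 0 <= Rsum l (fun k => (sqrt B * a k - sqrt A * b k) ^ 2)) by (apply Rsum_nonneg; intros; apply pow2_ge_0).
 destruct (Rlt_dec 0 (sqrt A * sqrt B)) as [Hp|Hp].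
 - assert (sqrt A * sqrt B * S <= (sqrt A * sqrt B) * (sqrt A * sqrt B)) by nra.
   apply Rmult_le_reg_l with (sqrt A * sqrt B); auto.
 - assert (Hz : sqrt A = 0 \/ sqrt B = 0) by nra.
   assert (S = 0).
   { unfold S. apply Rsum_zero. intros k Hk. destruct Hz as [Hz|Hz].
     + assert (A = 0) by nra. rewrite (Rsum_sq_zero l a H1 k Hk). ring.
     + assert (B = 0) by nra. rewrite (Rsum_sq_zero l b H1 k Hk). ring. }
   rewrite H1. nra.
Qed.

Lemma CS d a b : dot d a b <= norm2 d a * norm2 d b.
Proof. apply CS_list. Qed.

Lemma norm2_pos d a : 0 <= norm2 d a.
Proof. apply sqrt_pos. Qed.

Lemma dot_self d a : dot d a a = norm2 d a * norm2 d a.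
Proof. unfold norm2, dot. rewrite sqrt_sqrt. apply Rsum_ext_in; intros; ring.
 apply Rsum_nonneg; intros; apply pow2_ge_0. Qed.

Lemma sq_le_bound (n b : R) : 0 <= n -> 0 <= b -> n * n <= n * b -> n <= b.
Proof. intros. destruct (Req_dec n 0). lra. nra. Qed.

(* ---------- Erlang-type functions ---------- *)
Fixpoint pe (h : nat) (x : R) : R :=
  match h with O => 0 | S h' => pe h' x + x ^ h' / INR (fact h') end.
Definition gE (c : R) (h : nat) (t : R) : R := exp (- (c * t)) * pe h (c * t).
Fixpoint PE (c : R) (h : nat) (t : R) : R :=
  match h with O => 0 | S h' => PE c h' t + (1 - gE c (S h') t) / c end.

Lemma fact_pos n : 0 < INR (fact n).
Proof. apply lt_0_INR. apply lt_O_fact. Qed.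

Lemma pe_nonneg h x : 0 <= x -> 0 <= pe h x.
Proof. intros Hx; induction h; simpl. lra. assert (0 <= x ^ h) by (apply pow_le; auto).
 assert (0 < INR (fact h)) by apply fact_pos. assert (0 <= x ^ h / INR (fact h)) by (apply Rdiv_le_0_compat; auto). lra. Qed.
Lemma pe_mono h x : 0 <= x -> pe h x <= pe (S h) x.
Proof. intros Hx; simpl. assert (0 <= x ^ h) by (apply pow_le; auto).
 assert (0 < INR (fact h)) by apply fact_pos. assert (0 <= x ^ h / INR (fact h)) by (apply Rdiv_le_0_compat; auto). lra. Qed.
Lemma pe_S0 h : pe (S h) 0 = 1.
Proof. induction h. simpl. field. change (pe (S (S h)) 0) with (pe (S h) 0 + 0 ^ (S h) / INR (fact (S h))).
 rewrite IHh, pow_i by lia. unfold Rdiv. ring. Qed.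
Lemma pe_deriv h x : is_derive (pe (S h)) x (pe h x).
Proof. induction h.
 - simpl. apply (is_derive_ext (fun _ => 1)). intros; simpl; field. apply d_const.
 - change (pe (S (S h))) with (fun x => pe (S h) x + x ^ (S h) / INR (fact (S h))).
   apply (d_val _ _ (pe h x + (INR (S h) * 1 * x ^ h) * / INR (fact (S h)))).
   apply d_plus; auto. unfold Rdiv.
   apply (d_val _ _ ((INR (S h) * 1 * x ^ Init.Nat.pred (S h)) * / INR (fact (S h)) + x ^ (S h) * 0)).
   apply (d_mult (fun t => t ^ S h) (fun _ => / INR (fact (S h))) x). apply (is_derive_pow (fun t => t) (S h) x 1). apply d_id. apply d_const. simpl pred. ring.
   change (pe (S h) x) with (pe h x + x ^ h / INR (fact h)).
   change (fact (S h)) with ((S h) * fact h)%nat. rewrite mult_INR. field.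
   split. apply INR_fact_neq_0. apply not_0_INR. lia.
Qed.

Lemma gE_0 c t : gE c 0 t = 0.
Proof. unfold gE; simpl; ring. Qed.
Lemma gE_S0 c h : gE c (S h) 0 = 1.
Proof. unfold gE. rewrite Rmult_0_r, Ropp_0, exp_0, pe_S0. ring. Qed.
Lemma gE_nonneg c h t : 0 <= c -> 0 <= t -> 0 <= gE c h t.
Proof. intros. unfold gE. apply Rmult_le_pos. left; apply exp_pos. apply pe_nonneg. nra. Qed.
Lemma gE_mono c h t : 0 <= c -> 0 <= t -> gE c h t <= gE c (S h) t.
Proof. intros. unfold gE. apply Rmult_le_compat_l. left; apply exp_pos. apply pe_mono. nra. Qed.

Lemma gE_deriv c h t : is_derive (gE c (S h)) t (- c * (gE c (S h) t - gE c h t)).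
Proof. unfold gE.
 apply (d_val _ _ ((- c * exp (- (c * t))) * pe (S h) (c * t) + exp (- (c * t)) * (c * pe h (c * t)))).
 apply (d_mult (fun t => exp (- (c * t))) (fun t => pe (S h) (c * t)) t).
 - apply (d_val _ _ (- c * exp (- (c * t)))). 
   apply (d_comp exp (fun t => - (c * t)) t). apply is_derive_exp.
   apply (d_val _ _ (- (c * 1))). apply (is_derive_opp (fun t => c * t)). apply is_derive_scal. apply d_id. ring. ring.
 - apply (d_comp (pe (S h)) (fun t => c * t) t). apply pe_deriv.
   apply (d_val _ _ (c * 1)). apply is_derive_scal. apply d_id. ring.
 - ring.
Qed.

Lemma gE_cont_r c h : filterlim (gE c h) (at_right 0) (locally (gE c h 0)).
Proof. destruct h. apply (filterlim_ext (fun _ => 0)). intros; rewrite gE_0; auto.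
 rewrite gE_0. apply lim_const.
 apply (filterlim_filter_le_1 (F := locally 0)). intros P HP. apply filter_imp with (2 := HP). auto.
 apply (derive_cont _ _ _ (gE_deriv c h 0)). Qed.

Lemma PE_deriv c h t : c <> 0 -> is_derive (PE c h) t (gE c h t).
Proof. intros Hc. induction h.
 - simpl. rewrite gE_0. apply d_const.
 - change (PE c (S h)) with (fun t => PE c h t + (1 - gE c (S h) t) / c).
   apply (d_val _ _ (gE c h t + (0 - (- c * (gE c (S h) t - gE c h t))) * / c)).
   apply d_plus; auto. unfold Rdiv. apply (d_val _ _ ((0 - (- c * (gE c (S h) t - gE c h t))) * / c + (1 - gE c (S h) t) * 0)).
   apply (d_mult (fun t => 1 - gE c (S h) t) (fun _ => / c) t). apply d_minus. apply d_const. apply gE_deriv. apply d_const. ring. field; auto.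
Qed.
Lemma PE_0 c h : PE c h 0 = 0.
Proof. induction h; simpl. auto. rewrite IHh, gE_S0. unfold Rdiv; ring. Qed.
Lemma PE_bound c h t : 0 < c -> 0 <= t -> PE c h t <= INR h / c.
Proof. intros Hc Ht. induction h. simpl. unfold Rdiv; lra.
 simpl PE. rewrite S_INR. assert (0 <= gE c (S h) t) by (apply gE_nonneg; lra).
 assert ((1 - gE c (S h) t) / c <= 1 / c). { apply Rmult_le_compat_r. left; apply Rinv_0_lt_compat; auto. lra. }
 unfold Rdiv in *. lra. Qed.
Lemma PE_cont_r c h : 0 < c -> filterlim (PE c h) (at_right 0) (locally (PE c h 0)).
Proof. intros Hc. apply (filterlim_filter_le_1 (F := locally 0)). intros P HP. apply filter_imp with (2 := HP). auto.
 apply (derive_cont _ _ _ (PE_deriv c h 0 ltac:(lra))). Qed.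

Lemma pe_le_exp h : forall y, 0 <= y -> pe h y <= exp y.
Proof. induction h; intros y Hy. simpl. left; apply exp_pos.
 assert (Hm := comparison_mono (fun t => pe (S h) t - exp t) (fun t => pe h t - exp t) y).
 assert (pe (S h) y - exp y <= pe (S h) 0 - exp 0); [|rewrite pe_S0, exp_0 in H; lra].
 cbv beta in Hm. apply Hm; [| | |lra].
 - apply (cont_rcont (fun t => pe (S h) t - exp t)).
   apply (derive_cont (fun t => pe (S h) t - exp t) 0 (pe h 0 - exp 0)). apply d_minus. apply pe_deriv. apply is_derive_exp.
 - intros t Ht. apply d_minus. apply pe_deriv. apply is_derive_exp.
 - intros t Ht. assert (pe h t <= exp t) by (apply IHh; lra). lra.
Qed.

Lemma x_pe h y : 0 <= y -> y * pe h y <= INR h * pe (S h) y.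
Proof. intros Hy. induction h. simpl. lra.
 change (pe (S h) y) with (pe h y + y ^ h / INR (fact h)) at 1.
 change (pe (S (S h)) y) with (pe (S h) y + y ^ (S h) / INR (fact (S h))).
 assert (HP := pe_nonneg (S h) y Hy).
 assert (E : INR (S h) * (y ^ (S h) / INR (fact (S h))) = y * (y ^ h / INR (fact h))).
 { change (fact (S h)) with ((S h) * fact h)%nat. rewrite mult_INR. simpl pow. field.
   split. apply INR_fact_neq_0. apply not_0_INR. lia. }
 rewrite !Rmult_plus_distr_l, E, S_INR. nra.
Qed.

Lemma gE_decay c h t : 0 < c -> 0 < t -> gE c h t <= INR h / (c * t).
Proof. intros Hc Ht. unfold gE. set (y := c * t). assert (Hy : 0 < y) by (unfold y; nra).
 assert (h1 := x_pe h y ltac:(lra)). assert (h2 := pe_le_exp (S h) y ltac:(lra)).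
 assert (h3 : exp (- y) * exp y = 1) by (rewrite <- exp_plus; replace (- y + y) with 0 by ring; apply exp_0).
 assert (h4 := exp_pos (- y)). assert (h5 : 0 <= INR h) by apply pos_INR.
 apply Rmult_le_reg_l with y; auto. replace (y * (INR h / y)) with (INR h) by (field; lra).
 assert (y * (exp (- y) * pe h y) = exp (- y) * (y * pe h y)) by ring. rewrite H.
 apply Rle_trans with (exp (- y) * (INR h * pe (S h) y)). apply Rmult_le_compat_l; lra.
 apply Rle_trans with (exp (- y) * (INR h * exp y)). apply Rmult_le_compat_l. lra. apply Rmult_le_compat_l; lra.
 nra.
Qed.


Lemma path_ext N A b k a : has_path N A b k -> (1 <= a <= N)%nat -> a <> b -> 0 < A a b -> has_path N A a (S k).
Proof. intros [p [Hl [Hh [Hlast [Hf He]]]]] Ha Hab HA.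
 destruct p as [|b' q]. simpl in Hl; discriminate. simpl in Hh; subst b'.
 exists (a :: b :: q). split. simpl in *; lia. split. reflexivity. split.
 change (last (a :: b :: q) 0%nat) with (last (b :: q) 0%nat). auto.
 split. constructor; auto. simpl. split; auto. Qed.

Lemma path_exists N A : hier_leader N A -> forall a, (1 <= a <= N)%nat -> exists k, has_path N A a k.
Proof. intros [H1 H2] a. induction a as [a IH] using lt_wf_ind. intros Ha.
 destruct (Nat.eq_dec a 1) as [->|Hne].
 - exists 0%nat. exists [1%nat]. split. reflexivity. split. reflexivity. split. reflexivity.
   split. constructor; auto. simpl; auto.
 - destruct (H2 a ltac:(lia)) as [b [Hb HA]]. destruct (IH b ltac:(lia) ltac:(lia)) as [k Hk].
   exists (S k). apply path_ext with b; auto; lia. Qed.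

Lemma path_one N A k : hier_leader N A -> has_path N A 1 k -> k = 0%nat.
Proof. intros [H1 H2] [p [Hl [Hh [Hlast [Hf He]]]]].
 destruct p as [|b q]. simpl in Hl; discriminate. simpl in Hh; subst b.
 destruct q as [|w q]. simpl in Hl; lia. simpl in He. destruct He as [[Hne HA] _].
 assert (Hw : (1 <= w <= N)%nat). { inversion Hf as [|? ? ? Hf2]. inversion Hf2; auto. }
 assert (H1N : (1 <= 1 <= N)%nat). { inversion Hf; auto. }
 specialize (H1 1%nat w H1N Hw HA). lia. Qed.

Lemma path_bound N A H : hier_leader N A -> is_height N A H ->
  forall a k, (1 <= a <= N)%nat -> has_path N A a k -> (k <= H)%nat.
Proof. intros Hh [_ Hb] a k Ha Hp. destruct (Nat.eq_dec a 1) as [->|Hne].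
 rewrite (path_one N A k Hh Hp); lia. apply (Hb a); auto; lia. Qed.

Lemma height_pos N A H : is_height N A H -> (1 <= H)%nat.
Proof. intros [[i [Hi [p [Hl [Hh [Hlast _]]]]]] _].
 destruct p as [|b q]. simpl in Hl; discriminate. simpl in Hh; subst b.
 destruct q. simpl in Hlast. lia. simpl in Hl. lia. Qed.

Definition pairs N := flat_map (fun i => map (fun j => (i, j)) (seq 1 N)) (seq 1 N).
Lemma flat_map_pairs (D : nat -> nat -> R) l1 l2 :
  flat_map (fun i => map (fun j => D i j) l2) l1 = map (fun p => D (fst p) (snd p)) (flat_map (fun i => map (fun j => (i,j)) l2) l1).
Proof. induction l1; simpl; auto. rewrite map_app, IHl1, map_map. reflexivity. Qed.
Lemma diam_eq N d y t : diam N d y t = fold_right Rmax 0 (map (fun p => dist d y (fst p) (snd p) t) (pairs N)).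
Proof. unfold diam, pairs. rewrite flat_map_pairs. reflexivity. Qed.
Lemma in_pairs N p : In p (pairs N) -> (1 <= fst p <= N)%nat /\ (1 <= snd p <= N)%nat.
Proof. unfold pairs. intros H. apply in_flat_map in H. destruct H as [i [Hi H]]. apply in_map_iff in H.
 destruct H as [j [<- Hj]]. apply in_seq in Hi. apply in_seq in Hj. simpl; lia. Qed.
Lemma dist_nonneg d y i j t : 0 <= dist d y i j t.
Proof. apply sqrt_pos. Qed.
Lemma dist_le_diam N d y i j t : (1 <= i <= N)%nat -> (1 <= j <= N)%nat -> dist d y i j t <= diam N d y t.
Proof. intros. unfold diam. apply fold_max_ge. apply in_flat_map. exists i. split. apply in_seq; lia.
 apply (in_map (fun j => dist d y i j t)). apply in_seq; lia. Qed.
Lemma diam_le N d y t b : 0 <= b -> (forall i j, (1 <= i <= N)%nat -> (1 <= j <= N)%nat -> dist d y i j t <= b) -> diam N d y t <= b.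
Proof. intros Hb H. rewrite diam_eq. apply fold_max_le; auto. intros z Hz. apply in_map_iff in Hz.
 destruct Hz as [p [<- Hp]]. apply in_pairs in Hp. apply H; tauto. Qed.
Lemma diam_nonneg N d y t : 0 <= diam N d y t.
Proof. apply fold_max_ge0. Qed.

Lemma lim_pow2 {F} {FF : Filter F} (f : R -> R) a : filterlim f F (locally a) -> filterlim (fun t => f t ^ 2) F (locally (a ^ 2)).
Proof. intros H. replace (a ^ 2) with (a * a) by ring. apply (filterlim_ext (fun t => f t * f t)). intros; ring.
 apply lim_mult; auto. Qed.

Lemma lim_diam {F} {FF : Filter F} N d (y : state) t0 :
  (forall i k, (1 <= i <= N)%nat -> (k < d)%nat -> filterlim (y i k) F (locally (y i k t0))) ->
  filterlim (diam N d y) F (locally (diam N d y t0)).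
Proof. intros H. rewrite diam_eq. apply (filterlim_ext (fun t => fold_right Rmax 0 (map (fun p => dist d y (fst p) (snd p) t) (pairs N)))).
 intros; rewrite diam_eq; auto.
 apply (lim_fold_max (pairs N) (fun p t => dist d y (fst p) (snd p) t)). intros p Hp. apply in_pairs in Hp.
 unfold dist, norm2. apply lim_cont; [|apply continuous_sqrt].
 apply (lim_Rsum _ (fun k t => (y (fst p) k t - y (snd p) k t) ^ 2)). intros k Hk. apply in_seq in Hk.
 apply lim_pow2. apply lim_minus; apply H; (tauto || lia). Qed.


Section Core.
Variables (N d : nat) (alpha : R) (Q : R -> nat -> nat -> R) (x v : state) (A : nat -> nat -> R) (H : nat) (c r : R).
Hypothesis HN : (2 <= N)%nat.
Hypothesis Halpha : 0 < alpha.
Hypothesis Hc : 0 < c.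
Hypothesis Hsol : is_solution N d alpha Q x v.
Hypothesis HQ1 : forall t i j, 0 < t -> (1 <= i <= N)%nat -> (1 <= j <= N)%nat -> 0 <= Q t i j.
Hypothesis HQA : forall t i j, 0 < t -> (1 <= i <= N)%nat -> (1 <= j <= N)%nat -> 0 < Q t i j -> 0 < A i j.
Hypothesis Hhier : hier_leader N A.
Hypothesis Hheight : is_height N A H.
Hypothesis HD : forall t, 0 < t -> diam N d x t <= r -> forall i, (1 < i <= N)%nat -> c <= alpha * sum_ne N i (Q t i).

Definition sp (phi : nat -> R) (a : nat) (t : R) : R := dot d phi (fun k => v a k t - v 1%nat k t).

Lemma in_sum_ne i j : In j (filter (fun j => negb (Nat.eqb j i)) (seq 1 N)) -> (1 <= j <= N)%nat /\ j <> i.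
Proof. intros Hj. apply filter_In in Hj. destruct Hj as [Hj Hn]. apply in_seq in Hj.
 split. lia. intros ->. rewrite Nat.eqb_refl in Hn. discriminate. Qed.

Lemma Q_lead t j : 0 < t -> (1 <= j <= N)%nat -> Q t 1%nat j = 0.
Proof. intros Ht Hj. assert (H1 : (1 <= 1 <= N)%nat) by lia. assert (h := HQ1 t 1%nat j Ht H1 Hj).
 destruct h as [h|h]; auto. assert (h2 := HQA t 1%nat j Ht H1 Hj h). destruct Hhier as [Hh _].
 specialize (Hh 1%nat j H1 Hj h2). lia. Qed.

Lemma sp_deriv phi a t : 0 < t -> (1 <= a <= N)%nat ->
  is_derive (sp phi a) t (alpha * sum_ne N a (fun j => Q t a j * (sp phi j t - sp phi a t))).
Proof. intros Ht Ha. unfold sp, dot.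
 set (dv := fun i k => alpha * sum_ne N i (fun j => Q t i j * (v j k t - v i k t))).
 apply (d_val _ _ (Rsum (seq 0 d) (fun k => phi k * (dv a k - dv 1%nat k)))).
 apply (d_Rsum _ (fun k t => phi k * (v a k t - v 1%nat k t))). intros k Hk. apply in_seq in Hk.
 apply is_derive_scal. apply d_minus.
 apply (proj2 (proj2 (Hsol a k Ha ltac:(lia))) t Ht). apply (proj2 (proj2 (Hsol 1%nat k ltac:(lia) ltac:(lia))) t Ht).
 assert (E1 : forall k, dv 1%nat k = 0). { intros k. unfold dv, sum_ne. rewrite Rsum_zero. ring.
   intros j Hj. apply in_sum_ne in Hj. rewrite Q_lead; auto. ring. tauto. }
 rewrite (Rsum_ext_in _ _ (fun k => alpha * Rsum (filter (fun j => negb (Nat.eqb j a)) (seq 1 N)) (fun j => phi k * (Q t a j * (v j k t - v a k t))))).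
 rewrite Rsum_scal. unfold sum_ne. f_equal. rewrite Rsum_swap. apply Rsum_ext_in. intros j Hj.
 rewrite (Rsum_ext_in _ _ (fun k => Q t a j * (phi k * (v j k t - v a k t)))) by (intros; ring).
 rewrite Rsum_scal. f_equal. rewrite <- Rsum_minus. apply Rsum_ext_in; intros; ring.
 intros k Hk. rewrite E1. unfold dv, sum_ne. rewrite Rsum_scal. ring.
Qed.

Lemma sp_cont phi a : (1 <= a <= N)%nat -> filterlim (sp phi a) (at_right 0) (locally (sp phi a 0)).
Proof. intros Ha. unfold sp, dot.
 apply (lim_Rsum _ (fun k t => phi k * (v a k t - v 1%nat k t))). intros k Hk. apply in_seq in Hk.
 apply lim_mult. apply lim_const. apply lim_minus.
 apply (proj1 (proj2 (Hsol a k Ha ltac:(lia)))). apply (proj1 (proj2 (Hsol 1%nat k ltac:(lia) ltac:(lia)))). Qed.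

Lemma sp_one phi t : sp phi 1%nat t = 0.
Proof. unfold sp, dot. apply Rsum_zero. intros; ring. Qed.

Lemma claim phi M T : 0 <= M -> (forall a, (1 <= a <= N)%nat -> sp phi a 0 <= M) ->
  (forall t, 0 < t <= T -> diam N d x t <= r) ->
  forall a, (1 <= a <= N)%nat -> forall h, (forall k, has_path N A a k -> (k <= h)%nat) ->
  forall t, 0 <= t <= T -> sp phi a t <= M * gE c h t.
Proof.
 intros HM HM0 HT a. induction a as [a IH] using lt_wf_ind. intros Ha h Hh t Ht.
 destruct (Nat.eq_dec a 1) as [->|Hne].
 { rewrite sp_one. assert (0 <= gE c h t) by (apply gE_nonneg; lra). nra. }
 destruct Hhier as [Hh1 Hh2].
 destruct (Hh2 a ltac:(lia)) as [b0 [Hb0 HAb0]].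
 destruct (path_exists N A Hhier b0 ltac:(lia)) as [k0 Hk0].
 assert (Hp := Hh (S k0) (path_ext N A b0 k0 a Hk0 Ha ltac:(lia) HAb0)).
 destruct h as [|h']. lia.
 assert (IHb : forall b t, (1 <= b <= N)%nat -> 0 < A a b -> 0 <= t <= T -> sp phi b t <= M * gE c h' t).
 { intros b s Hb HAb Hs. assert (b < a)%nat by (apply Hh1; auto).
   apply IH; auto. intros k Hk. assert (S k <= S h')%nat. apply Hh. apply path_ext with b; auto. lia. lia. }
 set (df := fun t => alpha * sum_ne N a (fun j => Q t a j * (sp phi j t - sp phi a t)) - M * (- c * (gE c (S h') t - gE c h' t))).
 assert (Hcmp := comparison (fun t => sp phi a t - M * gE c (S h') t) df T).
 simpl in Hcmp. assert (sp phi a t - M * gE c (S h') t <= 0); [|lra].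
 apply Hcmp; auto.
 - apply lim_minus. apply sp_cont; auto. apply lim_mult. apply lim_const. apply gE_cont_r.
 - intros s Hs. apply d_minus. apply sp_deriv; auto. apply is_derive_scal. apply gE_deriv.
 - rewrite gE_S0. specialize (HM0 a Ha). lra.
 - intros s Hs Hpos. unfold df.
   set (K := M * gE c h' s).
   assert (Hsum : sum_ne N a (fun j => Q s a j * (sp phi j s - sp phi a s)) <= sum_ne N a (Q s a) * (K - sp phi a s)).
   { unfold sum_ne. rewrite <- Rsum_scal_r. apply Rsum_le_in. intros j Hj. apply in_sum_ne in Hj. destruct Hj as [Hj Hja].
     assert (hq := HQ1 s a j ltac:(lra) Ha Hj). destruct hq as [hq|hq].
     - assert (HAj := HQA s a j ltac:(lra) Ha Hj hq). assert (sp phi j s <= K) by (apply IHb; auto; lra). nra.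
     - rewrite <- hq. lra. }
   assert (HDs := HD s ltac:(lra) (HT s Hs) a ltac:(lia)).
   assert (Hg1 := gE_mono c h' s ltac:(lra) ltac:(lra)).
   assert (Hg0 := gE_nonneg c h' s ltac:(lra) ltac:(lra)).
   assert (HK : K - sp phi a s < 0). { unfold K. nra. }
   set (S0 := sum_ne N a (Q s a)) in *.
   assert (alpha * sum_ne N a (fun j => Q s a j * (sp phi j s - sp phi a s)) <= alpha * S0 * (K - sp phi a s)).
   { rewrite Rmult_assoc. apply Rmult_le_compat_l; lra. }
   assert (alpha * S0 * (K - sp phi a s) <= c * (K - sp phi a s)) by nra.
   unfold K in *. nra.
Qed.

Lemma sp_neg phi a t : sp (fun k => - phi k) a t = - sp phi a t.
Proof. unfold sp, dot. rewrite (Rsum_ext_in _ _ (fun k => -1 * (phi k * (v a k t - v 1%nat k t)))).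
 rewrite Rsum_scal; ring. intros; ring. Qed.

Lemma max_sp phi : exists M, 0 <= M /\ (forall a, (1 <= a <= N)%nat -> sp phi a 0 <= M) /\
  exists p, (1 <= p <= N)%nat /\ M = sp phi p 0.
Proof. set (L := map (fun a => sp phi a 0) (seq 1 N)). exists (fold_right Rmax 0 L). split. apply fold_max_ge0.
 split. intros a Ha. apply fold_max_ge. apply (in_map (fun a => sp phi a 0)). apply in_seq; lia.
 destruct (fold_max_in 0 L) as [E|E]. exists 1%nat. split. lia. rewrite E, sp_one; auto.
 apply in_map_iff in E. destruct E as [p [E Hp]]. apply in_seq in Hp. exists p. split. lia. auto. Qed.

Lemma vel_bound T : (forall t, 0 < t <= T -> diam N d x t <= r) ->
  forall t, 0 <= t <= T -> forall i j, (1 <= i <= N)%nat -> (1 <= j <= N)%nat ->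
  Defs.dist d v i j t <= diam N d v 0 * gE c H t.
Proof. intros HT t1 Ht1 i j Hi Hj.
 set (phi := fun k => v i k t1 - v j k t1).
 destruct (max_sp phi) as [M [HM [HM0 [p [Hp HMp]]]]].
 destruct (max_sp (fun k => - phi k)) as [M' [HM' [HM0' [q [Hq HMq]]]]].
 assert (Hpb := path_bound N A H Hhier Hheight).
 assert (C1 := claim phi M T HM HM0 HT i Hi H (fun k => Hpb i k Hi) t1 Ht1).
 assert (C2 := claim _ M' T HM' HM0' HT j Hj H (fun k => Hpb j k Hj) t1 Ht1).
 rewrite sp_neg in C2.
 assert (E1 : sp phi i t1 - sp phi j t1 = Defs.dist d v i j t1 * Defs.dist d v i j t1).
 { unfold Defs.dist. rewrite <- dot_self. unfold sp, dot. rewrite <- Rsum_minus. apply Rsum_ext_in; intros; unfold phi; ring. }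
 assert (E2 : M + M' <= Defs.dist d v i j t1 * diam N d v 0).
 { rewrite HMp, HMq, sp_neg. 
   assert (sp phi p 0 - sp phi q 0 = dot d phi (fun k => v p k 0 - v q k 0)).
   { unfold sp, dot. rewrite <- Rsum_minus. apply Rsum_ext_in; intros; ring. }
   assert (h1 := CS d phi (fun k => v p k 0 - v q k 0)).
   assert (h2 := dist_le_diam N d v p q 0 Hp Hq). unfold Defs.dist in h2.
   assert (h3 := norm2_pos d phi). fold (Defs.dist d v i j t1) in *.
   change (norm2 d phi) with (Defs.dist d v i j t1) in h1, h3. nra. }
 assert (Hg := gE_nonneg c H t1 ltac:(lra) ltac:(lra)).
 assert (h0 := dist_nonneg d v i j t1). assert (hV := diam_nonneg N d v 0).
 apply sq_le_bound; auto. apply Rmult_le_pos; auto. nra.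
Qed.

Lemma pos_bound T : (forall t, 0 < t <= T -> diam N d x t <= r) ->
  forall t, 0 <= t <= T -> diam N d x t <= diam N d x 0 + diam N d v 0 * INR H / c.
Proof. intros HT t1 Ht1.
 assert (hV := diam_nonneg N d v 0). assert (hX := diam_nonneg N d x 0).
 assert (hH : 0 <= INR H / c). { apply Rdiv_le_0_compat; auto. apply pos_INR. }
 assert (hVH : 0 <= diam N d v 0 * INR H / c). { unfold Rdiv. apply Rmult_le_pos; [apply Rmult_le_pos; auto; apply pos_INR | left; apply Rinv_0_lt_compat; auto]. }
 apply diam_le. lra.
 intros i j Hi Hj. set (phi := fun k => x i k t1 - x j k t1).
 set (V0 := diam N d v 0). set (nphi := norm2 d phi).
 set (f := fun t => dot d phi (fun k => x i k t - x j k t) - dot d phi (fun k => x i k 0 - x j k 0) - nphi * V0 * PE c H t).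
 set (df := fun t => dot d phi (fun k => v i k t - v j k t) - nphi * V0 * gE c H t).
 assert (Hm := comparison_mono f df T).
 assert (Hf : f t1 <= f 0).
 { apply Hm; auto.
   - unfold f. apply lim_minus. apply lim_minus. unfold dot.
     apply (lim_Rsum _ (fun k t => phi k * (x i k t - x j k t))). intros k Hk; apply in_seq in Hk.
     apply lim_mult. apply lim_const. apply lim_minus.
     apply (proj1 (Hsol i k Hi ltac:(lia))). apply (proj1 (Hsol j k Hj ltac:(lia))).
     apply lim_const. apply lim_mult. apply lim_const. apply PE_cont_r; auto.
   - intros t Ht. unfold f, df. apply d_minus. 
     apply (d_val _ _ (dot d phi (fun k => v i k t - v j k t) - 0)). apply d_minus.
     unfold dot. apply (d_Rsum _ (fun k t => phi k * (x i k t - x j k t))). intros k Hk; apply in_seq in Hk.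
     apply is_derive_scal. apply d_minus.
     apply (proj1 (proj2 (proj2 (Hsol i k Hi ltac:(lia))) t Ht)). apply (proj1 (proj2 (proj2 (Hsol j k Hj ltac:(lia))) t Ht)).
     apply d_const. ring. apply is_derive_scal. apply PE_deriv. lra.
   - intros t Ht. unfold df.
     assert (h1 := CS d phi (fun k => v i k t - v j k t)).
     assert (h2 := vel_bound T HT t ltac:(lra) i j Hi Hj). unfold Defs.dist in h2.
     assert (h3 := norm2_pos d phi). fold nphi in h1, h3. fold V0 in h2.
     assert (nphi * norm2 d (fun k => v i k t - v j k t) <= nphi * (V0 * gE c H t)) by (apply Rmult_le_compat_l; auto).
     lra. }
 unfold f in Hf. rewrite PE_0 in Hf.
 assert (E : dot d phi (fun k => x i k t1 - x j k t1) = nphi * nphi) by (apply dot_self).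
 assert (h1 := CS d phi (fun k => x i k 0 - x j k 0)). fold nphi in h1.
 assert (h2 := dist_le_diam N d x i j 0 Hi Hj). unfold Defs.dist in h2.
 assert (h3 := norm2_pos d phi). fold nphi in h3.
 assert (h4 := PE_bound c H t1 Hc ltac:(lra)).
 assert (nphi * norm2 d (fun k => x i k 0 - x j k 0) <= nphi * diam N d x 0) by (apply Rmult_le_compat_l; auto).
 assert (nphi * V0 * PE c H t1 <= nphi * V0 * (INR H / c)) by (apply Rmult_le_compat_l; auto; apply Rmult_le_pos; auto).
 change (Defs.dist d x i j t1) with nphi.
 assert (E2 : V0 * (INR H / c) = diam N d v 0 * INR H / c) by (unfold V0, Rdiv; ring).
 apply sq_le_bound; auto. lra. nra.
Qed.

Lemma rcont_gen (f : R -> R) t0 : 0 <= t0 -> filterlim f (at_right 0) (locally (f 0)) ->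
  (forall t, 0 < t -> filterlim f (locally t) (locally (f t))) ->
  forall eps, 0 < eps -> exists delta, 0 < delta /\ forall y, t0 < y < t0 + delta -> Rabs (f y - f t0) < eps.
Proof. intros Ht0 Hr Hc0 eps Heps. destruct (Req_dec t0 0) as [->|Hne].
 destruct (rcont_eps f Hr eps Heps) as [dl [Hd1 Hd2]]. exists dl; split; auto. intros y Hy; apply Hd2; lra.
 destruct (cont_eps f t0 (Hc0 t0 ltac:(lra)) eps Heps) as [dl [Hd1 Hd2]].
 exists dl; split; auto. intros y Hy; apply Hd2. rewrite Rabs_right; lra. Qed.

Lemma diam_cont_r : filterlim (diam N d x) (at_right 0) (locally (diam N d x 0)).
Proof. apply lim_diam. intros i k Hi Hk. apply (proj1 (Hsol i k Hi Hk)). Qed.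
Lemma diam_cont t : 0 < t -> filterlim (diam N d x) (locally t) (locally (diam N d x t)).
Proof. intros Ht. apply lim_diam. intros i k Hi Hk. apply (derive_cont _ _ _ (proj1 (proj2 (proj2 (Hsol i k Hi Hk)) t Ht))). Qed.

Lemma boot : diam N d x 0 + diam N d v 0 * INR H / c < r -> forall t, 0 <= t -> diam N d x t <= r.
Proof.
 intros Hr t1 Ht1. destruct (Rle_dec (diam N d x t1) r) as [|Hn]; auto. exfalso. apply Rnot_le_lt in Hn.
 set (rho := diam N d x 0 + diam N d v 0 * INR H / c) in *.
 assert (hV := diam_nonneg N d v 0).
 assert (hVH : 0 <= diam N d v 0 * INR H / c). { unfold Rdiv. apply Rmult_le_pos; [apply Rmult_le_pos; auto; apply pos_INR | left; apply Rinv_0_lt_compat; auto]. }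
 set (E := fun s => 0 <= s <= t1 /\ forall u, 0 < u <= s -> diam N d x u <= r).
 destruct (completeness E) as [t0 [Hub Hlub]].
 { exists t1. intros s [Hs _]. lra. } { exists 0. split. lra. intros; lra. }
 assert (Ht0a : 0 <= t0). { apply Hub. split. lra. intros; lra. }
 assert (Ht0b : t0 <= t1). { apply Hlub. intros s [Hs _]; lra. }
 assert (L1 : forall u, 0 <= u < t0 -> diam N d x u <= rho).
 { intros u Hu. destruct (Rle_dec (diam N d x u) rho) as [|hn]; auto. exfalso.
   assert (t0 <= u); [|lra]. apply Hlub. intros s [Hs1 Hs2]. destruct (Rle_dec s u) as [|hs]; auto. exfalso.
   apply hn. apply (pos_bound s); auto. lra. }
 assert (L2 : diam N d x t0 <= rho).
 { destruct (Req_dec t0 0) as [->|Hne]. unfold rho; lra.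
   destruct (Rle_dec (diam N d x t0) rho) as [|hn]; auto. exfalso. apply Rnot_le_lt in hn.
   destruct (cont_eps _ t0 (diam_cont t0 ltac:(lra)) (diam N d x t0 - rho) ltac:(lra)) as [dl [Hd1 Hd2]].
   assert (0 < Rmin dl t0) by (apply Rmin_glb_lt; lra).
   assert (Rmin dl t0 <= dl) by apply Rmin_l. assert (Rmin dl t0 <= t0) by apply Rmin_r.
   set (u := t0 - Rmin dl t0 / 2).
   assert (h1 : diam N d x u <= rho) by (apply L1; unfold u; lra).
   assert (h2 : Rabs (u - t0) < dl) by (unfold u; rewrite Rabs_left; lra).
   specialize (Hd2 u h2). apply Rabs_lt_between in Hd2. lra. }
 assert (L3 : forall u, 0 < u <= t0 -> diam N d x u <= rho).
 { intros u Hu. destruct (Req_dec u t0) as [->|]; auto. apply L1; lra. }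
 destruct (rcont_gen (diam N d x) t0 Ht0a diam_cont_r diam_cont (r - rho) ltac:(lra)) as [dl [Hd1 Hd2]].
 destruct (Req_dec t0 t1) as [<-|Hne]. lra.
 assert (0 < Rmin dl (t1 - t0)) by (apply Rmin_glb_lt; lra).
 assert (Rmin dl (t1 - t0) <= dl) by apply Rmin_l. assert (Rmin dl (t1 - t0) <= t1 - t0) by apply Rmin_r.
 set (s := t0 + Rmin dl (t1 - t0) / 2).
 assert (s <= t0); [|unfold s in *; lra].
 apply Hub. split. unfold s; lra. intros u Hu. destruct (Rle_dec u t0) as [hu|hu].
 assert (diam N d x u <= rho) by (apply L3; lra). lra.
 assert (h := Hd2 u ltac:(unfold s in *; lra)). apply Rabs_lt_between in h. lra.
Qed.

Lemma core_flocks : diam N d x 0 + diam N d v 0 * INR H / c < r -> flocks N d x v.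
Proof. intros Hr. assert (B := boot Hr). split.
 - exists r. auto.
 - set (K := diam N d v 0 * INR H / c).
   apply (is_lim_le_le_loc (fun _ => 0) (fun t => K * / t)).
   + exists 0. intros t Ht. split. apply diam_nonneg.
     assert (HT : forall s, 0 < s <= t -> diam N d x s <= r) by (intros; apply B; lra).
     apply Rle_trans with (diam N d v 0 * gE c H t).
     apply diam_le. apply Rmult_le_pos. apply diam_nonneg. apply gE_nonneg; lra.
     intros i j Hi Hj. apply (vel_bound t HT t); auto; lra.
     assert (h := gE_decay c H t Hc Ht). assert (hV := diam_nonneg N d v 0).
     apply Rle_trans with (diam N d v 0 * (INR H / (c * t))). apply Rmult_le_compat_l; auto.
     unfold K. right. field. lra.
   + apply is_lim_const.
   + replace (Finite 0) with (Rbar_mult K (Rbar_inv p_infty)). apply is_lim_scal_l.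
     apply is_lim_inv. apply is_lim_id. discriminate. simpl. f_equal. ring.
Qed.
End Core.


Lemma lub_extract (E : R -> Prop) (k z : R) : 0 < k ->
  Rbar_lt z (Rbar_mult k (Lub_Rbar E)) -> exists y, E y /\ z < k * y.
Proof. intros Hk Hlt. destruct (classic (exists y, E y /\ z < k * y)) as [|Hn]; auto. exfalso.
 assert (Hub : is_ub_Rbar E (z / k)).
 { intros y Ey. simpl. destruct (Rle_dec y (z / k)) as [|h]; auto. exfalso. apply Hn. exists y. split; auto.
   apply Rnot_le_lt in h. apply Rmult_lt_compat_l with (r := k) in h; auto.
   replace (k * (z / k)) with z in h by (field; lra). auto. }
 destruct (Lub_Rbar_correct E) as [_ Hl]. specialize (Hl _ Hub).
 destruct (Lub_Rbar E) as [l| |].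
 - simpl in Hlt, Hl. apply Rmult_le_compat_l with (r := k) in Hl; [|lra].
   replace (k * (z / k)) with z in Hl by (field; lra). lra.
 - simpl in Hl. auto.
 - unfold Rbar_mult, Rbar_mult' in Hlt. destruct (Rle_dec 0 k) as [h|h].
   destruct (Rle_lt_or_eq_dec 0 k h). simpl in Hlt; auto. lra. lra.
Qed.

Lemma div_le (a b c e : R) : 0 < b -> 0 < e -> a * e <= c * b -> a / b <= c / e.
Proof. intros Hb He H. replace (a / b) with (a * e * / (b * e)) by (field; lra).
 replace (c / e) with (c * b * / (b * e)) by (field; lra).
 apply Rmult_le_compat_r; auto. left; apply Rinv_0_lt_compat; nra. Qed.

Lemma psi_anti (psi : R -> R) :
  (forall r1 r2, 0 <= r1 -> 0 <= r2 -> (r1 - r2) * (psi r1 - psi r2) <= 0) ->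
  forall a b, 0 <= a -> a <= b -> psi b <= psi a.
Proof. intros H a b Ha Hab. destruct (Req_dec a b) as [->|]. lra.
 assert (h := H b a ltac:(lra) Ha). nra. Qed.

Lemma rowsum_pos N A i : hier_leader N A -> (1 < i <= N)%nat ->
  (forall i j, (1 <= i <= N)%nat -> (1 <= j <= N)%nat -> 0 <= A i j) -> 0 < rowsum N A i.
Proof. intros [_ H2] Hi HA. destruct (H2 i Hi) as [j [Hj HAj]]. unfold rowsum, sum_ne.
 apply Rsum_pos_in with j; auto.
 intros y Hy. apply filter_In in Hy. destruct Hy as [Hy _]. apply in_seq in Hy. apply HA; lia.
 apply filter_In. split. apply in_seq; lia. assert (Hne : j <> i) by lia. apply Nat.eqb_neq in Hne. rewrite Hne. reflexivity.
Qed.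

Lemma Astar_pos N A : (2 <= N)%nat -> hier_leader N A ->
  (forall i j, (1 <= i <= N)%nat -> (1 <= j <= N)%nat -> 0 <= A i j) -> 0 < Astar N A.
Proof. intros HN Hh HA. unfold Astar. apply min_gt1_pos; auto. intros i Hi. apply rowsum_pos; auto; lia. Qed.


Lemma r_cond (V0 X0 k c r HH : R) : 0 < HH -> 0 < c -> V0 < k * (r - X0) -> k * (r - X0) * HH = c * (r - X0) ->
  X0 + V0 * HH / c < r.
Proof. intros Hh Hc Hlt Heq.
 assert (V0 * HH < c * (r - X0)). { rewrite <- Heq. apply Rmult_lt_compat_r; auto. }
 assert (V0 * HH / c < r - X0); [|lra].
 apply Rmult_lt_reg_r with c; auto. replace (V0 * HH / c * c) with (V0 * HH) by (field; lra). lra. Qed.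

Lemma CS_part N d alpha A psi H :
  (2 <= N)%nat -> 0 < alpha ->
  (forall i j, (1 <= i <= N)%nat -> (1 <= j <= N)%nat -> 0 <= A i j) ->
  (forall r1 r2, 0 <= r1 -> 0 <= r2 -> (r1 - r2) * (psi r1 - psi r2) <= 0) ->
  (forall r, 0 <= r -> 0 < psi r /\ psi r <= psi 0) ->
  hier_leader N A -> is_height N A H ->
  forall x v : state,
     is_solution N d alpha (Q_CS d A psi x) x v ->
     Rbar_lt (diam N d v 0)
       (Rbar_mult (alpha * Astar N A / INR H)
          (Lub_Rbar (fun y => exists r, diam N d x 0 <= r /\
                        y = (r - diam N d x 0) * psi r))) ->
     flocks N d x v.
Proof.
 intros HN Ha HA Hmono Hpsi Hh Hheight x v Hsol Hlt.
 assert (HH : 0 < INR H) by (apply lt_0_INR; apply height_pos in Hheight; lia).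
 assert (HAs := Astar_pos N A HN Hh HA).
 assert (Hk : 0 < alpha * Astar N A / INR H) by (unfold Rdiv; apply Rmult_lt_0_compat; [nra|apply Rinv_0_lt_compat; auto]).
 destruct (lub_extract _ _ _ Hk Hlt) as [y [[r [Hr ->]] Hlt2]].
 assert (hX := diam_nonneg N d x 0).
 assert (Hpr := proj1 (Hpsi r ltac:(lra))).
 set (c := alpha * Astar N A * psi r).
 assert (Hc : 0 < c) by (unfold c; apply Rmult_lt_0_compat; nra).
 apply (core_flocks N d alpha (Q_CS d A psi x) x v A H c r); auto.
 - intros t i j Ht Hi Hj. unfold Q_CS. apply Rmult_le_pos. apply HA; auto. left; apply Hpsi. apply dist_nonneg.
 - intros t i j Ht Hi Hj Hq. unfold Q_CS in Hq. assert (h1 := HA i j Hi Hj).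
   assert (h2 := proj1 (Hpsi (dist d x j i t) (dist_nonneg _ _ _ _ _))). nra.
 - intros t Ht Hd i Hi.
   assert (HR : Astar N A <= rowsum N A i) by (apply min_gt1_le; lia).
   apply Rle_trans with (alpha * (rowsum N A i * psi r)). unfold c. rewrite Rmult_assoc. apply Rmult_le_compat_l. lra.
   apply Rmult_le_compat_r; lra.
   apply Rmult_le_compat_l. lra. unfold rowsum, sum_ne. rewrite <- Rsum_scal_r. apply Rsum_le_in.
   intros j Hj. apply (in_sum_ne N HN) in Hj. destruct Hj as [Hj _]. unfold Q_CS. apply Rmult_le_compat_l. apply HA; auto; lia.
   apply psi_anti; auto. apply dist_nonneg. apply Rle_trans with (diam N d x t); auto. apply dist_le_diam; auto; lia.
 - apply (r_cond _ _ (alpha * Astar N A / INR H * psi r)); auto.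
   replace (alpha * Astar N A / INR H * psi r * (r - diam N d x 0)) with (alpha * Astar N A / INR H * ((r - diam N d x 0) * psi r)) by ring. auto.
   unfold c. field. lra.
Qed.

Lemma sum_div N i (f : nat -> R) (D : R) : sum_ne N i (fun j => f j / D) = sum_ne N i f / D.
Proof. unfold sum_ne, Rdiv. apply Rsum_scal_r. Qed.

Lemma MT_HD N d alpha A psi (a : nat -> R) (x : state) :
  (2 <= N)%nat -> 0 < alpha ->
  (forall i j, (1 <= i <= N)%nat -> (1 <= j <= N)%nat -> 0 <= A i j) ->
  (forall r1 r2, 0 <= r1 -> 0 <= r2 -> (r1 - r2) * (psi r1 - psi r2) <= 0) ->
  (forall r, 0 <= r -> 0 < psi r /\ psi r <= psi 0) -> psi 0 <= 1 ->
  hier_leader N A ->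
  (forall i, (1 <= i <= N)%nat -> 0 <= a i) ->
  forall r t, 0 <= r -> 0 < t -> diam N d x t <= r -> forall i, (1 < i <= N)%nat ->
  alpha * Bstar N A a * ((abar N a + Astar N A) * psi r) / (abar N a + Astar N A * psi r)
    <= alpha * sum_ne N i (Q_MT N d A a psi x t i).
Proof.
 intros HN Ha HA Hmono Hpsi Hpsi0 Hh Ha0 r t Hr Ht Hd i Hi.
 set (S := sum_ne N i (fun k => A i k * psi (dist d x i k t))).
 assert (E : sum_ne N i (Q_MT N d A a psi x t i) = S / (a i + S)) by (unfold Q_MT; apply sum_div).
 rewrite E. set (R := rowsum N A i). set (p := psi r). set (B := Bstar N A a).
 set (ab := abar N a). set (As := Astar N A). set (ai := a i).
 assert (hp : 0 < p <= 1). { unfold p. destruct (Hpsi r Hr); lra. }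
 assert (hS : R * p <= S). { unfold R, S, rowsum, sum_ne. rewrite <- Rsum_scal_r. apply Rsum_le_in.
   intros j Hj. apply (in_sum_ne N HN) in Hj. destruct Hj as [Hj _]. apply Rmult_le_compat_l. apply HA; auto; lia.
   apply psi_anti; auto. apply dist_nonneg. apply Rle_trans with (diam N d x t); auto. apply dist_le_diam; auto; lia. }
 assert (hAs : 0 < As) by (apply Astar_pos; auto).
 assert (hR : As <= R) by (apply min_gt1_le; lia).
 assert (hai : 0 <= ai <= ab). { split. apply Ha0; lia. apply (max_gt1_ge N a i). lia. }
 assert (EB : forall i, sum_ne N i (Bmat N A a i) = rowsum N A i / (a i + rowsum N A i)).
 { intros i'. unfold Bmat. apply sum_div. }
 assert (hB : B <= R / (ai + R)). { unfold B, Bstar. apply Rle_trans with (sum_ne N i (Bmat N A a i)).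
   apply (min_gt1_le N (fun i => sum_ne N i (Bmat N A a i)) i). lia. rewrite EB. unfold R, ai; lra. }
 assert (hB0 : 0 < B). { unfold B, Bstar. apply min_gt1_pos; auto. intros i' Hi'. rewrite EB.
   assert (0 < rowsum N A i') by (apply rowsum_pos; auto; lia). assert (0 <= a i') by (apply Ha0; lia).
   apply Rdiv_lt_0_compat; lra. }
 assert (hY : 0 < ab + As * p) by nra.
 assert (hX : 0 <= (ab + As) * p / (ab + As * p)) by (apply Rdiv_le_0_compat; nra).
 replace (alpha * B * ((ab + As) * p) / (ab + As * p)) with (alpha * (B * ((ab + As) * p / (ab + As * p)))) by (field; lra).
 apply Rmult_le_compat_l. lra.
 apply Rle_trans with (R / (ai + R) * ((ab + As) * p / (ab + As * p))). apply Rmult_le_compat_r; auto.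
 apply Rle_trans with (R * p / (ai + R * p)).
 - replace (R / (ai + R) * ((ab + As) * p / (ab + As * p))) with ((R * ((ab + As) * p)) / ((ai + R) * (ab + As * p))) by (field; nra).
   apply div_le. nra. nra.
   assert (K : (ai + R) * (ab + As * p) - (ab + As) * (ai + R * p) = (1 - p) * (R * ab - ai * As)) by ring.
   assert (K2 : 0 <= (1 - p) * (R * ab - ai * As)) by (apply Rmult_le_pos; nra).
   assert (K3 : 0 <= R * p) by nra.
   replace (R * ((ab + As) * p) * (ai + R * p)) with (R * p * ((ab + As) * (ai + R * p))) by ring.
   replace (R * p * ((ai + R) * (ab + As * p))) with (R * p * ((ai + R) * (ab + As * p))) by ring.
   apply Rmult_le_compat_l; auto. lra.
 - apply div_le. nra. nra. nra.
Qed.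

Lemma MT_part N d alpha A psi H (a : nat -> R) :
  (2 <= N)%nat -> 0 < alpha ->
  (forall i j, (1 <= i <= N)%nat -> (1 <= j <= N)%nat -> 0 <= A i j) ->
  (forall r1 r2, 0 <= r1 -> 0 <= r2 -> (r1 - r2) * (psi r1 - psi r2) <= 0) ->
  (forall r, 0 <= r -> 0 < psi r /\ psi r <= psi 0) -> psi 0 <= 1 ->
  hier_leader N A -> is_height N A H ->
  (forall i, (1 <= i <= N)%nat -> 0 <= a i) ->
  (forall i, (1 <= i <= N)%nat -> (forall j, (1 <= j <= N)%nat -> j <> i -> A i j = 0) -> 0 < a i) ->
  forall x v : state, is_solution N d alpha (Q_MT N d A a psi x) x v ->
  forall c r, 0 < c -> diam N d x 0 + diam N d v 0 * INR H / c < r ->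
  c <= alpha * Bstar N A a * ((abar N a + Astar N A) * psi r) / (abar N a + Astar N A * psi r) ->
  flocks N d x v.
Proof.
 intros HN Ha HA Hmono Hpsi Hpsi0 Hh Hheight Ha0 Ha1 x v Hsol c r Hc Hr Hcr.
 assert (hX := diam_nonneg N d x 0). assert (hV := diam_nonneg N d v 0).
 assert (hVH : 0 <= diam N d v 0 * INR H / c). { unfold Rdiv. apply Rmult_le_pos; [apply Rmult_le_pos; auto; apply pos_INR | left; apply Rinv_0_lt_compat; auto]. }
 assert (Hden : forall t i, (1 <= i <= N)%nat -> 0 < a i + sum_ne N i (fun k => A i k * psi (dist d x i k t))).
 { intros t i Hi. assert (Hnn : 0 <= sum_ne N i (fun k => A i k * psi (dist d x i k t))).
   { apply Rsum_nonneg. intros j Hj. apply (in_sum_ne N HN) in Hj. destruct Hj as [Hj _].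
     apply Rmult_le_pos. apply HA; auto. left; apply Hpsi, dist_nonneg. }
   destruct (Nat.eq_dec i 1) as [->|Hne].
   - assert (0 < a 1%nat); [|lra]. apply Ha1; auto. intros j Hj Hj1.
     destruct (HA 1%nat j Hi Hj) as [h|h]; auto. destruct Hh as [Hh1 _]. specialize (Hh1 1%nat j Hi Hj h). lia.
   - destruct Hh as [_ Hh2]. destruct (Hh2 i ltac:(lia)) as [j [Hj HAj]].
     assert (0 < sum_ne N i (fun k => A i k * psi (dist d x i k t))).
     { apply Rsum_pos_in with j. intros y Hy. apply (in_sum_ne N HN) in Hy. destruct Hy as [Hy _].
       apply Rmult_le_pos. apply HA; auto. left; apply Hpsi, dist_nonneg.
       apply filter_In. split. apply in_seq; lia. assert (Hne' : j <> i) by lia. apply Nat.eqb_neq in Hne'. rewrite Hne'. reflexivity.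
       apply Rmult_lt_0_compat; auto. apply Hpsi, dist_nonneg. }
     assert (0 <= a i) by auto. lra. }
 apply (core_flocks N d alpha (Q_MT N d A a psi x) x v A H c r); auto.
 - intros t i j Ht Hi Hj. unfold Q_MT. apply Rdiv_le_0_compat. apply Rmult_le_pos. apply HA; auto. left; apply Hpsi, dist_nonneg.
   apply Hden; auto.
 - intros t i j Ht Hi Hj Hq. destruct (HA i j Hi Hj) as [h|h]; auto. unfold Q_MT in Hq. rewrite <- h in Hq.
   unfold Rdiv in Hq. rewrite !Rmult_0_l in Hq. lra.
 - intros t Ht Hd i Hi. eapply Rle_trans. apply Hcr. apply MT_HD; auto. lra.
Qed.

Theorem theorem3p9 (N d : nat) (alpha : R) (A : nat -> nat -> R) (psi : R -> R)
  (H : nat) :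
  (2 <= N)%nat -> (1 <= d)%nat -> 0 < alpha ->
  (forall i j, (1 <= i <= N)%nat -> (1 <= j <= N)%nat -> 0 <= A i j) ->
  (forall r1 r2, 0 <= r1 -> 0 <= r2 -> (r1 - r2) * (psi r1 - psi r2) <= 0) ->
  (forall r, 0 <= r -> 0 < psi r /\ psi r <= psi 0) ->
  psi 0 <= 1 ->
  hier_leader N A ->
  is_height N A H ->
  (* Cucker-Smale model *)
  (forall x v : state,
     is_solution N d alpha (Q_CS d A psi x) x v ->
     Rbar_lt (diam N d v 0)
       (Rbar_mult (alpha * Astar N A / INR H)
          (Lub_Rbar (fun y => exists r, diam N d x 0 <= r /\
                        y = (r - diam N d x 0) * psi r))) ->
     flocks N d x v) /\
  (* Motsch-Tadmor model *)
  (forall a : nat -> R,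
     (forall i, (1 <= i <= N)%nat -> 0 <= a i) ->
     (forall i, (1 <= i <= N)%nat ->
        (forall j, (1 <= j <= N)%nat -> j <> i -> A i j = 0) -> 0 < a i) ->
     (forall x v : state,
        is_solution N d alpha (Q_MT N d A a psi x) x v ->
        Rbar_lt (diam N d v 0)
          (Rbar_mult (alpha * Bstar N A a / INR H)
             (Lub_Rbar (fun y => exists r, diam N d x 0 <= r /\
                 y = (r - diam N d x 0) * ((abar N a + Astar N A) * psi r)
                       / (abar N a + Astar N A * psi r)))) ->
        flocks N d x v) /\
     (abar N a = 0 ->
      forall x v : state,
        is_solution N d alpha (Q_MT N d A a psi x) x v ->
        flocks N d x v)).
Proof.
 intros HN Hd1 Ha HA Hmono Hpsi Hpsi0 Hh Hheight. split.
 { apply CS_part; auto. }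
 intros a Ha0 Ha1.
 assert (HH : 0 < INR H) by (apply lt_0_INR; apply height_pos in Hheight; lia).
 assert (HAs := Astar_pos N A HN Hh HA).
 assert (EB : forall i, sum_ne N i (Bmat N A a i) = rowsum N A i / (a i + rowsum N A i)).
 { intros i'. unfold Bmat. apply sum_div. }
 assert (hB0 : 0 < Bstar N A a). { unfold Bstar. apply min_gt1_pos; auto. intros i' Hi'. rewrite EB.
   assert (0 < rowsum N A i') by (apply rowsum_pos; auto; lia). assert (0 <= a i') by (apply Ha0; lia).
   apply Rdiv_lt_0_compat; lra. }
 assert (hab : 0 <= abar N a) by (apply Rle_trans with (a 2%nat); [apply Ha0; lia | apply max_gt1_ge; lia]).
 split.
 - intros x v Hsol Hlt.
   assert (Hk : 0 < alpha * Bstar N A a / INR H) by (unfold Rdiv; apply Rmult_lt_0_compat; [nra|apply Rinv_0_lt_compat; auto]).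
   destruct (lub_extract _ _ _ Hk Hlt) as [y [[r [Hr ->]] Hlt2]].
   assert (hX := diam_nonneg N d x 0).
   assert (Hpr := proj1 (Hpsi r ltac:(lra))).
   set (c := alpha * Bstar N A a * ((abar N a + Astar N A) * psi r) / (abar N a + Astar N A * psi r)).
   assert (hY : 0 < abar N a + Astar N A * psi r) by nra.
   assert (Hc : 0 < c). { unfold c. apply Rdiv_lt_0_compat; auto. apply Rmult_lt_0_compat. nra. nra. }
   apply (MT_part N d alpha A psi H a HN Ha HA Hmono Hpsi Hpsi0 Hh Hheight Ha0 Ha1 x v Hsol c r Hc); [|unfold c; lra].
   apply (r_cond _ _ (alpha * Bstar N A a / INR H * ((abar N a + Astar N A) * psi r) / (abar N a + Astar N A * psi r))); auto.
   replace (alpha * Bstar N A a / INR H * ((abar N a + Astar N A) * psi r) / (abar N a + Astar N A * psi r) * (r - diam N d x 0))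
     with (alpha * Bstar N A a / INR H * ((r - diam N d x 0) * ((abar N a + Astar N A) * psi r) / (abar N a + Astar N A * psi r))) by (field; lra).
   auto.
   unfold c. field. lra.
 - intros Hab0 x v Hsol.
   set (c := alpha * Bstar N A a).
   assert (Hc : 0 < c) by (unfold c; nra).
   assert (hX := diam_nonneg N d x 0).
   set (r := diam N d x 0 + diam N d v 0 * INR H / c + 1).
   assert (hV := diam_nonneg N d v 0).
   assert (hVH : 0 <= diam N d v 0 * INR H / c). { unfold Rdiv. apply Rmult_le_pos; [apply Rmult_le_pos; auto; apply pos_INR | left; apply Rinv_0_lt_compat; auto]. }
   assert (Hpr := proj1 (Hpsi r ltac:(unfold r; lra))).
   apply (MT_part N d alpha A psi H a HN Ha HA Hmono Hpsi Hpsi0 Hh Hheight Ha0 Ha1 x v Hsol c r Hc). unfold r; lra.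
   rewrite Hab0. right. unfold c. field. nra.
Qed.
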